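(* Let $K\in\{3,4\}$. For generic $U,H,W\in\mathbb{C}^{K\times K}$ (that is, for all triples outside the zero set of some nonzero polynomial in their entries), there exist diagonal matrices $D_1,D_2,D_3\in\mathbb{C}^{K\times K}$ and scalars $\lambda_1,\dots,\lambda_K\in\mathbb{C}$ such that, with $B:=HD_1+HD_2U+WD_3H$, for every $i\in\{1,\dots,K\}$ we have $B_{ij}=\lambda_i H_{ij}$ for all $j\neq i$, and $B_{ii}\neq \lambda_i H_{ii}$.
   Context: Setting: a $K$-user interference channel with full-duplex (in-band) interaction: $H$ is the channel matrix from sources to destinations, $U$ the channel matrix among sources, $W$ the channel matrix among destinations. In a two-phase scheme, in phase 1 sources send $x$, sources receive $Ux$ and destinations receive $Hx$; in phase 2 sources send $D_1x+D_2(Ux)$ and destinations send $D_3(Hx)$, so destinations receive $Bx$ (noise ignored). The diagonal coding matrices reflect that each node codes only over its own signals. The conditions mean interference at each destination is aligned between the two phases while the desired signal survives cancellation. *)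

(* Defs.v *)
From HB Require Import structures.
From mathcomp Require Import all_boot all_order all_algebra.
From mathcomp Require Import Rstruct.
From mathcomp Require Import complex.
From mathcomp Require Import mpoly.
From Stdlib Require Import Reals.
Set Implicit Arguments. Unset Strict Implicit. Unset Printing Implicit Defensive.
Import GRing.Theory Num.Theory.
Local Open Scope ring_scope.

Definition C : Type := complex Rdefinitions.R.


(* Vector of the 3K^2 entries of (U, H, W), used as the variables of a
   polynomial in the entries. *)
Definition entries (K : nat) (U H W : 'M[C]_K) : 'rV[C]_(K * K + K * K + K * K) :=
  row_mx (row_mx (mxvec U) (mxvec H)) (mxvec W).

Definition eval_entries (K : nat) (P : {mpoly C[K * K + K * K + K * K]})
  (U H W : 'M[C]_K) : C :=
  meval (fun i => entries U H W 0 i) P.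

Definition Bmat (K : nat) (U H W : 'M[C]_K) (d1 d2 d3 : 'rV[C]_K) : 'M[C]_K :=
  H *m diag_mx d1 + H *m diag_mx d2 *m U + W *m diag_mx d3 *m H.

(* Main.v *)
Require Import Defs.
From HB Require Import structures.
From mathcomp Require Import all_boot all_order all_algebra.
From mathcomp Require Import Rstruct complex.
From mathcomp Require Import mpoly.
From mathcomp Require Import ring.
Import GRing.Theory Num.Theory.
Local Open Scope ring_scope.
Set Implicit Arguments. Unset Strict Implicit. Unset Printing Implicit Defensive.

Local Notation o0 := (@Ordinal 4 0 isT).
Local Notation o1 := (@Ordinal 4 1 isT).
Local Notation o2 := (@Ordinal 4 2 isT).
Local Notation o3 := (@Ordinal 4 3 isT).

Lemma sum4 (R : nmodType) (F : 'I_4 -> R) : \sum_(k < 4) F k = F o0 + F o1 + F o2 + F o3.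
Proof. rewrite !big_ord_recl big_ord0 addr0 !addrA; by congr (F _ + F _ + F _ + F _); apply: val_inj. Qed.

Definition BmatR (R : comRingType) (K : nat) (U H W : 'M[R]_K) (d1 d2 d3 : 'rV[R]_K) : 'M[R]_K :=
  H *m diag_mx d1 + H *m diag_mx d2 *m U + W *m diag_mx d3 *m H.

Lemma BmatRE (R : comRingType) K (U H W : 'M[R]_K) d1 d2 d3 i j :
  BmatR U H W d1 d2 d3 i j = H i j * d1 0 j + \sum_k H i k * d2 0 k * U k j
     + \sum_k W i k * d3 0 k * H k j.
Proof.
rewrite /BmatR !mul_mx_diag !mxE; congr (_ + _ + _).
  by apply: eq_bigr => k _; rewrite !mxE.
by apply: eq_bigr => k _; rewrite !mxE.
Qed.

Lemma BmatC K (U H W : 'M[C]_K) d1 d2 d3 : Bmat U H W d1 d2 d3 = BmatR U H W d1 d2 d3.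
Proof. by []. Qed.

Definition a4 (R : comRingType) (X : 'M[R]_4) : 'rV[R]_4 :=
  \row_k (X o0 k * (k != 0%N :> nat)%:R).
Definition Lmat4 (R : comRingType) (U H W : 'M[R]_4) (X : 'M[R]_4) : 'M[R]_4 :=
  BmatR U H W (a4 X) (row o1 X) (row o2 X) - diag_mx (row o3 X) *m H
  - \matrix_(i, j) (X o0 o0 * (((i : nat) == 3%N) && ((j : nat) == 3%N))%:R).

Lemma Lmat4E (R : comRingType) (U H W X : 'M[R]_4) i j :
  Lmat4 U H W X i j = H i j * (X o0 j * (j != 0%N :> nat)%:R)
   + (H i o0 * X o1 o0 * U o0 j + H i o1 * X o1 o1 * U o1 j + H i o2 * X o1 o2 * U o2 j + H i o3 * X o1 o3 * U o3 j)
   + (W i o0 * X o2 o0 * H o0 j + W i o1 * X o2 o1 * H o1 j + W i o2 * X o2 o2 * H o2 j + W i o3 * X o2 o3 * H o3 j)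
   - X o3 i * H i j - X o0 o0 * (((i : nat) == 3%N) && ((j : nat) == 3%N))%:R.
Proof.
rewrite /Lmat4 /BmatR !mul_mx_diag mul_diag_mx !mxE !sum4 !mxE.
by [].
Qed.

Definition mk4 (t : seq (seq nat)) : 'M[C]_4 := \matrix_(i, j) (nth 0%N (nth [::] t i) j)%:R.
Definition H0 := mk4 [:: [:: 0;1;1;0]; [:: 1;1;0;1]; [:: 0;1;0;1]; [:: 1;0;1;0]]%N.
Definition U0 := mk4 [:: [:: 0;0;0;1]; [:: 0;0;1;0]; [:: 1;0;0;0]; [:: 0;0;1;0]]%N.
Definition W0 := mk4 [:: [:: 0;0;1;0]; [:: 0;0;0;0]; [:: 0;1;1;1]; [:: 1;0;1;0]]%N.
Lemma inv4_00 (X : 'M[C]_4) : X o0 o0 = (1%:R) * Lmat4 U0 H0 W0 X o0 o3 + (- 1%:R) * Lmat4 U0 H0 W0 X o1 o1 + (1%:R) * Lmat4 U0 H0 W0 X o1 o3 + (1%:R) * Lmat4 U0 H0 W0 X o2 o1 + (- 1%:R) * Lmat4 U0 H0 W0 X o2 o3 + (- 1%:R) * Lmat4 U0 H0 W0 X o3 o3.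
Proof. rewrite !Lmat4E !mxE /=; ring. Qed.
Lemma inv4_01 (X : 'M[C]_4) : X o0 o1 = (- 1%:R) * Lmat4 U0 H0 W0 X o1 o0 + (1%:R) * Lmat4 U0 H0 W0 X o1 o1.
Proof. rewrite !Lmat4E !mxE /=; ring. Qed.
Lemma inv4_02 (X : 'M[C]_4) : X o0 o2 = (1%:R) * Lmat4 U0 H0 W0 X o0 o0 + (1%:R) * Lmat4 U0 H0 W0 X o0 o3 + (- 1%:R) * Lmat4 U0 H0 W0 X o3 o0 + (- 1%:R) * Lmat4 U0 H0 W0 X o3 o1 + (1%:R) * Lmat4 U0 H0 W0 X o3 o2.
Proof. rewrite !Lmat4E !mxE /=; ring. Qed.
Lemma inv4_03 (X : 'M[C]_4) : X o0 o3 = (- 1%:R) * Lmat4 U0 H0 W0 X o1 o0 + (1%:R) * Lmat4 U0 H0 W0 X o1 o1 + (- 1%:R) * Lmat4 U0 H0 W0 X o2 o1 + (1%:R) * Lmat4 U0 H0 W0 X o2 o3.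
Proof. rewrite !Lmat4E !mxE /=; ring. Qed.
Lemma inv4_10 (X : 'M[C]_4) : X o1 o0 = (- 1%:R) * Lmat4 U0 H0 W0 X o1 o1 + (1%:R) * Lmat4 U0 H0 W0 X o1 o3 + (1%:R) * Lmat4 U0 H0 W0 X o2 o1 + (- 1%:R) * Lmat4 U0 H0 W0 X o2 o3.
Proof. rewrite !Lmat4E !mxE /=; ring. Qed.
Lemma inv4_11 (X : 'M[C]_4) : X o1 o1 = (- 1%:R) * Lmat4 U0 H0 W0 X o0 o0 + (- 1%:R) * Lmat4 U0 H0 W0 X o0 o1 + (1%:R) * Lmat4 U0 H0 W0 X o0 o2 + (- 1%:R) * Lmat4 U0 H0 W0 X o1 o0 + (1%:R) * Lmat4 U0 H0 W0 X o1 o1 + (1%:R) * Lmat4 U0 H0 W0 X o3 o0 + (1%:R) * Lmat4 U0 H0 W0 X o3 o1 + (- 1%:R) * Lmat4 U0 H0 W0 X o3 o2.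
Proof. rewrite !Lmat4E !mxE /=; ring. Qed.
Lemma inv4_12 (X : 'M[C]_4) : X o1 o2 = (1%:R) * Lmat4 U0 H0 W0 X o0 o0.
Proof. rewrite !Lmat4E !mxE /=; ring. Qed.
Lemma inv4_13 (X : 'M[C]_4) : X o1 o3 = (1%:R) * Lmat4 U0 H0 W0 X o0 o0 + (1%:R) * Lmat4 U0 H0 W0 X o0 o1 + (- 1%:R) * Lmat4 U0 H0 W0 X o0 o2 + (1%:R) * Lmat4 U0 H0 W0 X o1 o0 + (- 1%:R) * Lmat4 U0 H0 W0 X o1 o1 + (1%:R) * Lmat4 U0 H0 W0 X o1 o2 + (- 1%:R) * Lmat4 U0 H0 W0 X o3 o0 + (- 1%:R) * Lmat4 U0 H0 W0 X o3 o1 + (1%:R) * Lmat4 U0 H0 W0 X o3 o2.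
Proof. rewrite !Lmat4E !mxE /=; ring. Qed.
Lemma inv4_20 (X : 'M[C]_4) : X o2 o0 = (- 1%:R) * Lmat4 U0 H0 W0 X o0 o3 + (1%:R) * Lmat4 U0 H0 W0 X o3 o1.
Proof. rewrite !Lmat4E !mxE /=; ring. Qed.
Lemma inv4_21 (X : 'M[C]_4) : X o2 o1 = (1%:R) * Lmat4 U0 H0 W0 X o1 o2 + (1%:R) * Lmat4 U0 H0 W0 X o2 o0 + (- 1%:R) * Lmat4 U0 H0 W0 X o2 o2.
Proof. rewrite !Lmat4E !mxE /=; ring. Qed.
Lemma inv4_22 (X : 'M[C]_4) : X o2 o2 = (1%:R) * Lmat4 U0 H0 W0 X o0 o3.
Proof. rewrite !Lmat4E !mxE /=; ring. Qed.
Lemma inv4_23 (X : 'M[C]_4) : X o2 o3 = (- 1%:R) * Lmat4 U0 H0 W0 X o1 o2 + (1%:R) * Lmat4 U0 H0 W0 X o2 o2.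
Proof. rewrite !Lmat4E !mxE /=; ring. Qed.
Lemma inv4_30 (X : 'M[C]_4) : X o3 o0 = (- 1%:R) * Lmat4 U0 H0 W0 X o0 o1 + (1%:R) * Lmat4 U0 H0 W0 X o0 o3 + (- 1%:R) * Lmat4 U0 H0 W0 X o1 o0 + (1%:R) * Lmat4 U0 H0 W0 X o1 o1.
Proof. rewrite !Lmat4E !mxE /=; ring. Qed.
Lemma inv4_31 (X : 'M[C]_4) : X o3 o1 = (- 1%:R) * Lmat4 U0 H0 W0 X o1 o0.
Proof. rewrite !Lmat4E !mxE /=; ring. Qed.
Lemma inv4_32 (X : 'M[C]_4) : X o3 o2 = (1%:R) * Lmat4 U0 H0 W0 X o0 o3 + (- 1%:R) * Lmat4 U0 H0 W0 X o1 o0 + (1%:R) * Lmat4 U0 H0 W0 X o1 o1 + (1%:R) * Lmat4 U0 H0 W0 X o1 o2 + (1%:R) * Lmat4 U0 H0 W0 X o2 o0 + (- 1%:R) * Lmat4 U0 H0 W0 X o2 o1 + (- 1%:R) * Lmat4 U0 H0 W0 X o2 o2.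
Proof. rewrite !Lmat4E !mxE /=; ring. Qed.
Lemma inv4_33 (X : 'M[C]_4) : X o3 o3 = (1%:R) * Lmat4 U0 H0 W0 X o0 o0 + (- 1%:R) * Lmat4 U0 H0 W0 X o3 o0.
Proof. rewrite !Lmat4E !mxE /=; ring. Qed.


Lemma ord4P (t : 'I_4) : t = o0 \/ t = o1 \/ t = o2 \/ t = o3.
Proof.
case: t => [[|[|[|[|//]]]] ht].
- by left; apply: val_inj.
- by right; left; apply: val_inj.
- by right; right; left; apply: val_inj.
- by right; right; right; apply: val_inj.
Qed.

Lemma Lmat4_lin (R : comRingType) (U H W : 'M[R]_4) a X Y :
  Lmat4 U H W (a *: X + Y) = a *: Lmat4 U H W X + Lmat4 U H W Y.
Proof.
apply/matrixP => i j.
have -> : (a *: Lmat4 U H W X + Lmat4 U H W Y) i j = a * Lmat4 U H W X i j + Lmat4 U H W Y i j.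
  by rewrite [LHS]mxE [in LHS]mxE.
rewrite !Lmat4E !mxE; ring.
Qed.

Lemma Lmat4_map (R S : comRingType) (g : {rmorphism R -> S}) (U H W X : 'M[R]_4) :
  map_mx g (Lmat4 U H W X) = Lmat4 (map_mx g U) (map_mx g H) (map_mx g W) (map_mx g X).
Proof.
apply/matrixP => i j.
rewrite [LHS]mxE !Lmat4E !rmorphB !rmorphD !rmorphM !rmorph_nat !mxE.
by [].
Qed.

Section Lin4.
Variables (R : comRingType) (U H W : 'M[R]_4).
Definition f4 (x : 'rV[R]_(4 * 4)) : 'rV[R]_(4 * 4) := mxvec (Lmat4 U H W (vec_mx x)).
Fact f4_lin : linear f4.
Proof. by move=> a x y; rewrite /f4 linearP Lmat4_lin linearP. Qed.
HB.instance Definition _ := GRing.isLinear.Build R _ _ _ f4 f4_lin.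
End Lin4.

Definition N4 (R : comRingType) (U H W : 'M[R]_4) : 'M[R]_(4 * 4) := lin1_mx (f4 U H W).

Lemma N4_map (R S : comRingType) (g : {rmorphism R -> S}) (U H W : 'M[R]_4) :
  map_mx g (N4 U H W) = N4 (map_mx g U) (map_mx g H) (map_mx g W).
Proof.
apply/matrixP => i j; rewrite /N4 [LHS]mxE [RHS]mxE [X in g X]mxE.
have -> : g (f4 U H W (delta_mx 0 i) 0 j) = (map_mx g (f4 U H W (delta_mx 0 i))) 0 j by rewrite mxE.
by rewrite /f4 map_mxvec Lmat4_map map_vec_mx map_delta_mx.
Qed.

Local Notation ev U H W := (meval (fun k => entries U H W 0 k)).
Section Vars.
Variable K : nat.
Definition Upk : 'M[{mpoly C[K * K + K * K + K * K]}]_K :=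
  \matrix_(i, j) 'X_(lshift (K * K) (lshift (K * K) (mxvec_index i j))).
Definition Hpk : 'M[{mpoly C[K * K + K * K + K * K]}]_K :=
  \matrix_(i, j) 'X_(lshift (K * K) (rshift (K * K) (mxvec_index i j))).
Definition Wpk : 'M[{mpoly C[K * K + K * K + K * K]}]_K :=
  \matrix_(i, j) 'X_(rshift (K * K + K * K) (mxvec_index i j)).


Lemma evU U H W : map_mx (ev U H W) Upk = U.
Proof. by apply/matrixP => i j; rewrite !mxE mevalXU /entries row_mxEl row_mxEl mxvecE. Qed.
Lemma evH U H W : map_mx (ev U H W) Hpk = H.
Proof. by apply/matrixP => i j; rewrite !mxE mevalXU /entries row_mxEl row_mxEr mxvecE. Qed.
Lemma evW U H W : map_mx (ev U H W) Wpk = W.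
Proof. by apply/matrixP => i j; rewrite !mxE mevalXU /entries row_mxEr mxvecE. Qed.
End Vars.

Definition T4 (R : comRingType) : 'M[R]_4 :=
  \matrix_(i, j) ((((i : nat) == j) && ((i : nat) != 3%N))%:R).

Lemma T4_map (R S : comRingType) (g : {rmorphism R -> S}) : map_mx g (T4 R) = T4 S.
Proof. by apply/matrixP => i j; rewrite !mxE rmorph_nat. Qed.

Definition P4 : {mpoly C[4 * 4 + 4 * 4 + 4 * 4]} :=
  \det (N4 (Upk 4) (Hpk 4) (Wpk 4)) *
  (mxvec (T4 _) *m \adj (N4 (Upk 4) (Hpk 4) (Wpk 4))) 0 (mxvec_index o0 o0).

Lemma P4E U H W : eval_entries P4 U H W =
  \det (N4 U H W) * (mxvec (T4 C) *m \adj (N4 U H W)) 0 (mxvec_index o0 o0).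
Proof.
rewrite /eval_entries /P4 mevalM.
rewrite -det_map_mx N4_map evU evH evW; congr (_ * _).
have -> : forall (A : 'M_(1, 4 * 4)), ev U H W (A 0 (mxvec_index o0 o0)) = (map_mx (ev U H W) A) 0 (mxvec_index o0 o0) by move=> A; rewrite mxE.
by rewrite map_mxM map_mxvec T4_map map_mx_adj N4_map evU evH evW.
Qed.

Lemma Lmat4_split (R : comRingType) (U H W X : 'M[R]_4) i j :
  Lmat4 U H W X i j = BmatR U H W (a4 X) (row o1 X) (row o2 X) i j - X o3 i * H i j
    - X o0 o0 * (((i : nat) == 3%N) && ((j : nat) == 3%N))%:R.
Proof. by rewrite Lmat4E BmatRE !sum4 !mxE. Qed.

Lemma solve4 (U H W : 'M[C]_4) : \det (N4 U H W) != 0 ->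
  let X := vec_mx (mxvec (T4 C) *m invmx (N4 U H W)) in
  Lmat4 U H W X = T4 C /\
  (mxvec (T4 C) *m \adj (N4 U H W)) 0 (mxvec_index o0 o0) = \det (N4 U H W) * X o0 o0.
Proof.
move=> hd X.
have hu : N4 U H W \in unitmx by rewrite unitmxE unitfE.
split.
  apply: (can_inj mxvecK).
  change (f4 U H W (mxvec (T4 C) *m invmx (N4 U H W)) = mxvec (T4 C)).
  by rewrite -mul_rV_lin1 -/(N4 U H W) mulmxKV.
rewrite /X -[vec_mx _ o0 o0]mxvecE vec_mxK /invmx hu -scalemxAr [in RHS]mxE mulrA mulfV ?mul1r //.
Qed.

Lemma detN0 : \det (N4 U0 H0 W0) != 0.
Proof.
apply/negP => /det0P [v nz vN].
have hL : Lmat4 U0 H0 W0 (vec_mx v) = 0.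
  apply: (can_inj mxvecK).
  change (f4 U0 H0 W0 v = mxvec 0).
  by rewrite -mul_rV_lin1 -/(N4 U0 H0 W0) vN linear0.
have : vec_mx v = 0.
  apply/matrixP => t k; move/matrixP: hL => hL.
  case: (ord4P t) => [->|[->|[->|->]]]; case: (ord4P k) => [->|[->|[->|->]]];
  [ rewrite (inv4_00 (vec_mx v)) | rewrite (inv4_01 (vec_mx v)) | rewrite (inv4_02 (vec_mx v)) | rewrite (inv4_03 (vec_mx v)) | rewrite (inv4_10 (vec_mx v)) | rewrite (inv4_11 (vec_mx v)) | rewrite (inv4_12 (vec_mx v)) | rewrite (inv4_13 (vec_mx v)) | rewrite (inv4_20 (vec_mx v)) | rewrite (inv4_21 (vec_mx v)) | rewrite (inv4_22 (vec_mx v)) | rewrite (inv4_23 (vec_mx v)) | rewrite (inv4_30 (vec_mx v)) | rewrite (inv4_31 (vec_mx v)) | rewrite (inv4_32 (vec_mx v)) | rewrite (inv4_33 (vec_mx v)) ];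
  rewrite !hL !mxE; ring.
by move/eqP; rewrite vec_mx_eq0 (negbTE nz).
Qed.

Lemma QN0 : (mxvec (T4 C) *m \adj (N4 U0 H0 W0)) 0 (mxvec_index o0 o0) != 0.
Proof.
have [hT ->] := solve4 detN0.
rewrite mulf_neq0 ?detN0 //.
set X := vec_mx _ in hT *.
have -> : X o0 o0 = -1.
  by rewrite (inv4_00 X) !hT !mxE /=; ring.
by rewrite oppr_eq0 oner_eq0.
Qed.


Lemma main4 : exists P : {mpoly C[4 * 4 + 4 * 4 + 4 * 4]},
    P != 0 /\
    forall U H W : 'M[C]_4,
      eval_entries P U H W != 0 ->
      exists (d1 d2 d3 : 'rV[C]_4) (lam : 'I_4 -> C),
        forall i : 'I_4,
          (forall j : 'I_4, j != i -> Bmat U H W d1 d2 d3 i j = lam i * H i j) /\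
          Bmat U H W d1 d2 d3 i i != lam i * H i i.
Proof.
exists P4; split.
  apply/negP => /eqP h0.
  have := P4E U0 H0 W0; rewrite h0 /eval_entries meval0 => h.
  have : \det (N4 U0 H0 W0) * (mxvec (T4 C) *m \adj (N4 U0 H0 W0)) 0 (mxvec_index o0 o0) != 0.
    by rewrite mulf_neq0 ?detN0 ?QN0.
  by rewrite -h eqxx.
move=> U H W; rewrite P4E mulf_eq0 negb_or => /andP [hd hq].
have [hT hQ] := solve4 hd.
set X := vec_mx _ in hT hQ.
have he : X o0 o0 != 0.
  by apply: contraNneq hq; rewrite hQ => ->; rewrite mulr0.
exists (a4 X), (row o1 X), (row o2 X), (fun i => X o3 i) => i.
move/matrixP: hT => hT.
have key : forall j, Bmat U H W (a4 X) (row o1 X) (row o2 X) i j - X o3 i * H i j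
    - X o0 o0 * (((i : nat) == 3%N) && ((j : nat) == 3%N))%:R = T4 C i j.
  by move=> j; rewrite -(hT i j) Lmat4_split.
split.
  move=> j hji; have := key j; rewrite [T4 C i j]mxE.
  have hij : ((i : nat) == j) = false.
    by apply/eqP => /val_inj e; move: hji; rewrite e eqxx.
  have h33 : (((i : nat) == 3%N) && ((j : nat) == 3%N)) = false.
    by apply/andP => -[/eqP a /eqP b]; move: hij; rewrite a b.
  rewrite hij h33 /= => h.
  apply/eqP; rewrite -subr_eq0; apply/eqP.
  rewrite (_ : _ - _ = Bmat U H W (a4 X) (row o1 X) (row o2 X) i j - X o3 i * H i j - X o0 o0 * 0); first exact: h.
  by rewrite mulr0 subr0.
have := key i; rewrite [T4 C i i]mxE eqxx /=.
case: (boolP ((i : nat) == 3%N)) => h3 /= h; apply/eqP => hb; move: h; rewrite hb => h.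
  have h' : - X o0 o0 = 0 by apply: (etrans _ h); ring.
  by move/eqP: h'; rewrite oppr_eq0 (negbTE he).
have h' : (0 : C) = 1 by apply: (etrans _ h); ring.
by move/eqP: h'; rewrite eq_sym oner_eq0.
Qed.


Local Notation p0 := (@Ordinal 3 0 isT).
Local Notation p1 := (@Ordinal 3 1 isT).
Local Notation p2 := (@Ordinal 3 2 isT).

Lemma sum3 (R : nmodType) (F : 'I_3 -> R) : \sum_(k < 3) F k = F p0 + F p1 + F p2.
Proof. rewrite !big_ord_recl big_ord0 addr0 !addrA; by congr (F _ + F _ + F _); apply: val_inj. Qed.

Lemma ord3P (t : 'I_3) : t = p0 \/ t = p1 \/ t = p2.
Proof.
case: t => [[|[|[|//]]] ht].
- by left; apply: val_inj.
- by right; left; apply: val_inj.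
- by right; right; apply: val_inj.
Qed.

Definition Lmat3 (R : comRingType) (U H W : 'M[R]_3) (X : 'M[R]_3) : 'M[R]_3 :=
  BmatR U H W (row p0 X) (row p1 X) (row p2 X).

Lemma Lmat3E (R : comRingType) (U H W X : 'M[R]_3) i j :
  Lmat3 U H W X i j = H i j * X p0 j
   + (H i p0 * X p1 p0 * U p0 j + H i p1 * X p1 p1 * U p1 j + H i p2 * X p1 p2 * U p2 j)
   + (W i p0 * X p2 p0 * H p0 j + W i p1 * X p2 p1 * H p1 j + W i p2 * X p2 p2 * H p2 j).
Proof. by rewrite /Lmat3 BmatRE !sum3 !mxE. Qed.

Lemma Lmat3_lin (R : comRingType) (U H W : 'M[R]_3) a X Y :
  Lmat3 U H W (a *: X + Y) = a *: Lmat3 U H W X + Lmat3 U H W Y.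
Proof.
apply/matrixP => i j.
have -> : (a *: Lmat3 U H W X + Lmat3 U H W Y) i j = a * Lmat3 U H W X i j + Lmat3 U H W Y i j.
  by rewrite [LHS]mxE [in LHS]mxE.
rewrite !Lmat3E !mxE; ring.
Qed.

Lemma Lmat3_map (R S : comRingType) (g : {rmorphism R -> S}) (U H W X : 'M[R]_3) :
  map_mx g (Lmat3 U H W X) = Lmat3 (map_mx g U) (map_mx g H) (map_mx g W) (map_mx g X).
Proof.
apply/matrixP => i j.
rewrite [LHS]mxE !Lmat3E !rmorphD !rmorphM !mxE.
by [].
Qed.

Section Lin3.
Variables (R : comRingType) (U H W : 'M[R]_3).
Definition f3 (x : 'rV[R]_(3 * 3)) : 'rV[R]_(3 * 3) := mxvec (Lmat3 U H W (vec_mx x)).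
Fact f3_lin : linear f3.
Proof. by move=> a x y; rewrite /f3 linearP Lmat3_lin linearP. Qed.
HB.instance Definition _ := GRing.isLinear.Build R _ _ _ f3 f3_lin.
End Lin3.

Definition N3 (R : comRingType) (U H W : 'M[R]_3) : 'M[R]_(3 * 3) := lin1_mx (f3 U H W).

Lemma N3_map (R S : comRingType) (g : {rmorphism R -> S}) (U H W : 'M[R]_3) :
  map_mx g (N3 U H W) = N3 (map_mx g U) (map_mx g H) (map_mx g W).
Proof.
apply/matrixP => i j; rewrite /N3 [LHS]mxE [RHS]mxE [X in g X]mxE.
have -> : g (f3 U H W (delta_mx 0 i) 0 j) = (map_mx g (f3 U H W (delta_mx 0 i))) 0 j by rewrite mxE.
by rewrite /f3 map_mxvec Lmat3_map map_vec_mx map_delta_mx.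
Qed.

Definition P3 : {mpoly C[3 * 3 + 3 * 3 + 3 * 3]} := \det (N3 (Upk 3) (Hpk 3) (Wpk 3)).

Lemma P3E U H W : eval_entries P3 U H W = \det (N3 U H W).
Proof. by rewrite /eval_entries /P3 -det_map_mx N3_map evU evH evW. Qed.

Definition mk3 (t : seq (seq nat)) : 'M[C]_3 := \matrix_(i, j) (nth 0%N (nth [::] t i) j)%:R.
Definition H3 := mk3 [:: [:: 1;0;0]; [:: 0;1;0]; [:: 0;0;1]]%N.
Definition U3 := mk3 [:: [:: 0;1;0]; [:: 0;0;1]; [:: 1;0;0]]%N.
Definition W3 := mk3 [:: [:: 0;0;1]; [:: 1;0;0]; [:: 0;1;0]]%N.

Lemma solve3 (U H W : 'M[C]_3) : \det (N3 U H W) != 0 ->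
  Lmat3 U H W (vec_mx (mxvec 1%:M *m invmx (N3 U H W))) = 1%:M.
Proof.
move=> hd.
have hu : N3 U H W \in unitmx by rewrite unitmxE unitfE.
apply: (can_inj mxvecK).
change (f3 U H W (mxvec 1%:M *m invmx (N3 U H W)) = mxvec 1%:M).
by rewrite -mul_rV_lin1 -/(N3 U H W) mulmxKV.
Qed.

Lemma detN3 : \det (N3 U3 H3 W3) != 0.
Proof.
apply/negP => /det0P [v nz vN].
have hL : Lmat3 U3 H3 W3 (vec_mx v) = 0.
  apply: (can_inj mxvecK).
  change (f3 U3 H3 W3 v = mxvec 0).
  by rewrite -mul_rV_lin1 -/(N3 U3 H3 W3) vN linear0.
have : vec_mx v = 0.
  apply/matrixP => t k; move/matrixP: hL => hL.
  case: (ord3P t) => [->|[->|->]]; case: (ord3P k) => [->|[->|->]];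
  [ have e := hL p0 p0 | have e := hL p1 p1 | have e := hL p2 p2
  | have e := hL p0 p1 | have e := hL p1 p2 | have e := hL p2 p0
  | have e := hL p1 p0 | have e := hL p2 p1 | have e := hL p0 p2 ];
  rewrite Lmat3E !mxE /= in e; rewrite !mxE; apply: (etrans _ e); ring.
by move/eqP; rewrite vec_mx_eq0 (negbTE nz).
Qed.

Lemma main3 : exists P : {mpoly C[3 * 3 + 3 * 3 + 3 * 3]},
    P != 0 /\
    forall U H W : 'M[C]_3,
      eval_entries P U H W != 0 ->
      exists (d1 d2 d3 : 'rV[C]_3) (lam : 'I_3 -> C),
        forall i : 'I_3,
          (forall j : 'I_3, j != i -> Bmat U H W d1 d2 d3 i j = lam i * H i j) /\
          Bmat U H W d1 d2 d3 i i != lam i * H i i.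
Proof.
exists P3; split.
  apply/negP => /eqP h0.
  have := P3E U3 H3 W3; rewrite h0 /eval_entries meval0 => h.
  by move: detN3; rewrite -h eqxx.
move=> U H W; rewrite P3E => hd.
have hT := solve3 hd.
set X := vec_mx _ in hT.
exists (row p0 X), (row p1 X), (row p2 X), (fun _ => 0) => i.
move/matrixP: hT => hT.
have key : forall j, Bmat U H W (row p0 X) (row p1 X) (row p2 X) i j = (i == j)%:R.
  by move=> j; rewrite BmatC; move: (hT i j); rewrite [1%:M i j]mxE => <-.
split.
  by move=> j hji; rewrite key mul0r eq_sym (negbTE hji).
by rewrite key eqxx mul0r oner_eq0.
Qed.

Theorem theorem5 (K : nat) (hK : K = 3%N \/ K = 4%N) :
  exists P : {mpoly C[K * K + K * K + K * K]},
    P != 0 /\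
    forall U H W : 'M[C]_K,
      eval_entries P U H W != 0 ->
      exists (d1 d2 d3 : 'rV[C]_K) (lam : 'I_K -> C),
        forall i : 'I_K,
          (forall j : 'I_K, j != i -> Bmat U H W d1 d2 d3 i j = lam i * H i j) /\
          Bmat U H W d1 d2 d3 i i != lam i * H i i.
Proof.
by case: hK => ->; [exact: main3 | exact: main4].
Qed.
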